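(* Let $M$ be a causal generative model (CGM) with latent domain $\mathcal{Z}=\prod_{k=1}^K\mathcal{Z}_k$. If the latent mapping $g_M$ is injective and $\mathcal{Z}$ is compact (i.e. all intervals $\mathcal{Z}_k$ are closed and bounded), then $M$ is embedded.
   Context: A causal generative model (CGM) $M=\mathbb{G}(\mathcal{Z},\mathbf{S},\mathcal{G})$ consists of: $K$ real-valued latent variables $\bm z=(z_k)$ taking values in $\mathcal{Z}=\prod_{k=1}^K\mathcal{Z}_k$, each $\mathcal{Z}_k$ a closed interval; a directed acyclic graph $\mathcal{G}$; and a set $\mathbf{S}$ of $N+1$ deterministic continuous structural equations assigning $N$ endogenous variables $V_k:=f_k(\mathbf{Pa}_k)$ with values in Euclidean spaces $\mathcal{V}^k$ (parents $\mathbf{Pa}_k$ in $\mathcal{G}$ being latent or endogenous), and one output $Y:=f_y(\mathbf{Pa}_y)$ with values in a Euclidean space $\mathcal{Y}$ (parents endogenous). $\mathcal{G}$ has exactly $K$ sources, one per latent variable, and $Y$ is its only sink. A layer $\ell$ is a minimal subset of endogenous variables such that every directed path from a latent node to $Y$ contains at least one element of $\ell$. Image sets: $\mathcal{Y}_M=\{Y(\bm z):\bm z\in\mathcal{Z}\}$ and, for a set $\mathcal{E}$ of endogenous variables, $\bm{\mathcal{V}}^{\mathcal{E}}_M=\{\bm V_{|\mathcal{E}}(\bm z):\bm z\in\mathcal{Z}\}\subseteq\prod_{k\in\mathcal{E}}\mathcal{V}^k$. The latent mapping is $g_M:\mathcal{Z}\to\mathcal{Y}_M$, $\bm z\mapsto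 Y(\bm z)$, and for a layer $\ell$ the layer mapping is $\tilde g^\ell_M:\bm{\mathcal{V}}^\ell_M\to\mathcal{Y}_M$, $\bm v\mapsto Y(\bm v)$ (output obtained by assigning layer $\ell$ the values $\bm v$ and computing downstream). A continuous injective $f:X\to Y$ with continuous inverse $f^{-1}:f[X]\to X$ is called an embedding. $M$ is embedded if $g_M$ and the $\tilde g^\ell_M$ of all layers $\ell$ are embeddings of $\mathcal{Z}$, resp. $\bm{\mathcal{V}}^\ell_M$, into $\mathcal{Y}$. All spaces carry Euclidean (subspace/product) topologies. *)

(* Defs.v *)
From HB Require Import structures.
From mathcomp Require Import all_boot all_order all_algebra.
From mathcomp Require Import all_classical all_reals all_analysis.
Set Implicit Arguments. Unset Strict Implicit. Unset Printing Implicit Defensive.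
Import Order.TTheory GRing.Theory Num.Theory.
Import numFieldNormedType.Exports.
Local Open Scope classical_set_scope.
Local Open Scope ring_scope.

Definition embedding_on {T U : topologicalType} (A : set T) (f : T -> U) : Prop :=
  [/\ {within A, continuous f},
      (forall x y, A x -> A y -> f x = f y -> x = y) &
      exists h : U -> T, {within f @` A, continuous h} /\
                         (forall x, A x -> h (f x) = x)].

Definition Vprod (R : realType) (N : nat) (d : 'I_N -> nat) :=
  prod_topology (fun i : 'I_N => 'rV[R]_(d i)).

(* A causal generative model.
   - latent variables z_k, k : 'I_K, z : 'rV_K, z_k = z ord0 k, with domain Zk k
     (a closed interval of R);
   - endogenous variables V_j, j : 'I_N, with values in R^(d j) = 'rV_(d j);
   - output Y with values in R^dy;
   - DAG: lpar j k  <-> latent z_k is a parent of V_j,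
          par i j   <-> V_i is a parent of V_j,
          ypar j    <-> V_j is a parent of Y;
   - structural equations f j (continuous, depending only on parents) and fy. *)
Record CGM (R : realType) := {
  K : nat;
  N : nat;
  d : 'I_N -> nat;
  dy : nat;
  Zk : 'I_K -> set R;
  Zk_interval : forall k, is_interval (Zk k);
  Zk_closed : forall k, closed (Zk k);
  lpar : 'I_N -> 'I_K -> bool;
  par : rel 'I_N;
  ypar : pred 'I_N;
  par_acyclic : forall i j, par i j -> ~~ connect par j i;
  (* the sources are exactly the latent nodes *)
  endo_not_source : forall j, [exists k, lpar j k] || [exists i, par i j];
  y_not_source : exists j, ypar j;
  (* Y is the only sink *)
  latent_not_sink : forall k, exists j, lpar j k;
  endo_not_sink : forall j, ypar j || [exists i, par j i];
  f : forall j : 'I_N, 'rV[R]_K -> Vprod R d -> 'rV[R]_(d j);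
  fy : Vprod R d -> 'rV[R]_dy;
  f_parents : forall j (z z' : 'rV[R]_K) (V V' : Vprod R d),
      (forall k, lpar j k -> z ord0 k = z' ord0 k) ->
      (forall i, par i j -> V i = V' i) -> f j z V = f j z' V';
  fy_parents : forall V V' : Vprod R d, (forall i, ypar i -> V i = V' i) -> fy V = fy V';
  f_cont : forall j,
      {within [set p : 'rV[R]_K * Vprod R d |
                 forall k, Zk k (p.1 ord0 k)],
       continuous (fun p => f j p.1 p.2)};
  fy_cont : continuous fy
}.

Section CGMdefs.
Context {R : realType} (M : CGM R).

Definition Zset : set 'rV[R]_(K M) := [set z | forall k, Zk k (z ord0 k)].

Definition Vassign := Vprod R (@d R M).

(* values of all endogenous variables for latent z (N rounds of the structural
   equations reach the unique solution since the graph is acyclic) *)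
Definition eval (z : 'rV[R]_(K M)) : Vassign :=
  iter (N M) (fun V j => f j z V) (fun j => 0).

Definition eval_do (l : {set 'I_(N M)}) (v : Vassign) (z : 'rV[R]_(K M)) : Vassign :=
  iter (N M) (fun V j => if j \in l then v j else f j z V) (fun j => 0).

Definition gM (z : 'rV[R]_(K M)) : 'rV[R]_(dy M) := fy (eval z).

(* l cuts every directed path latent -> ... -> Y *)
Definition cut (l : {set 'I_(N M)}) : bool :=
  ~~ [exists k : 'I_(K M), exists j : 'I_(N M), exists j' : 'I_(N M),
      [&& lpar j k, ypar j', j \notin l, j' \notin l &
          connect [rel a b | [&& par a b, a \notin l & b \notin l]] j j']].

Definition layer (l : {set 'I_(N M)}) : bool := minset cut l.

(* a point of prod_{j in l} V^j, represented as an assignment vanishing off l *)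
Definition restr (l : {set 'I_(N M)}) (V : Vassign) : Vassign :=
  fun j => if j \in l then V j else 0.

Definition layer_image (l : {set 'I_(N M)}) : set Vassign :=
  [set restr l (eval z) | z in Zset].

(* layer mapping: assign l the values v and compute downstream; the remaining
   (non-downstream) variables are computed from an arbitrary latent z0, which
   does not affect Y when l is a layer *)
Definition layer_map (l : {set 'I_(N M)}) (z0 : 'rV[R]_(K M)) (v : Vassign)
  : 'rV[R]_(dy M) := fy (eval_do l v z0).

Definition embedded : Prop :=
  embedding_on Zset gM /\
  forall l, layer l -> forall z0, Zset z0 -> embedding_on (layer_image l) (layer_map l z0).

End CGMdefs.

Arguments Zset {R} M _.
Arguments eval {R} M z.
Arguments eval_do {R} M l v z.
Arguments gM {R} M z.
Arguments cut {R} M l.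
Arguments layer {R} M l.
Arguments layer_image {R} M l _.
Arguments layer_map {R} M l z0 v.
Arguments embedded {R} M.

(* Main.v *)
Require Import Defs.
From HB Require Import structures.
From mathcomp Require Import all_boot all_order all_algebra.
From mathcomp Require Import all_classical all_reals all_analysis.
Import numFieldNormedType.Exports.
Local Open Scope classical_set_scope.
Local Open Scope ring_scope.



Section Comb.
Context {R : realType} (M : CGM R).

Definition rk (j : 'I_(N M)) : nat := #|[set i | connect (@par R M) i j]%SET|.

Lemma rk_par i j : par i j -> (rk i < rk j)%N.
Proof.
move=> pij; apply: proper_card; apply/properP; split.
  apply/fintype.subsetP => x; rewrite !inE => cxi.
  by apply: connect_trans cxi (connect1 pij).
exists j; first by rewrite inE connect0.
by rewrite inE (negbTE (par_acyclic pij)).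
Qed.

Lemma rk_pos j : (0 < rk j)%N.
Proof. by apply/card_gt0P; exists j; rewrite inE connect0. Qed.

Lemma rk_le j : (rk j <= N M)%N.
Proof. by rewrite /rk; apply: leq_trans (max_card _) _; rewrite card_ord. Qed.

Lemma iter_stable (F : Vassign M -> Vassign M) (x : Vassign M) :
  (forall V V' j, (forall i, par i j -> V i = V' i) -> F V j = F V' j) ->
  forall n j, (rk j <= n)%N -> forall m, (n <= m)%N -> iter m F x j = iter n F x j.
Proof.
move=> Floc; elim=> [|n IH] j rj m nm.
  by have := rk_pos j; rewrite lt0n -leqn0 rj.
case: m nm => [//|m] nm /=.
apply: Floc => i pij; apply: IH; last exact: nm.
by rewrite -ltnS; apply: leq_trans (rk_par _ _ pij) rj.
Qed.

Lemma iter_fix (F : Vassign M -> Vassign M) (x : Vassign M) :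
  (forall V V' j, (forall i, par i j -> V i = V' i) -> F V j = F V' j) ->
  forall j, F (iter (N M) F x) j = iter (N M) F x j.
Proof.
move=> Floc j.
by rewrite -[LHS]/(iter (N M).+1 F x j) (iter_stable _ _ Floc _ _ (rk_le j)).
Qed.

Lemma eval_fix z j : Defs.eval M z j = f j z (Defs.eval M z).
Proof.
rewrite /Defs.eval -(iter_fix (fun V j => f j z V)) //.
by move=> V V' j' H; apply: f_parents.
Qed.

Lemma eval_do_fix l v z j :
  eval_do M l v z j = if j \in l then v j else f j z (eval_do M l v z).
Proof.
rewrite /eval_do -(iter_fix (fun V j => if j \in l then v j else f j z V)) //.
by move=> V V' j' H; case: ifP => // _; apply: f_parents.
Qed.

Lemma layer_map_eval l z0 z : Defs.cut M l ->
  layer_map M l z0 (restr l (Defs.eval M z)) = Defs.gM M z.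
Proof.
move=> cl.
set E := Defs.eval M z; set D := eval_do M l (restr l E) z0.
pose rnl := [rel a b | [&& par a b, a \notin l & b \notin l]].
have Dl j : j \in l -> D j = E j.
  by move=> jl; rewrite /D eval_do_fix jl /restr jl.
have key : forall n j, (rk j <= n)%N -> j \notin l ->
    (forall k a, lpar a k -> a \notin l -> ~~ connect rnl a j) -> D j = E j.
  elim=> [|n IH] j rj jl free.
    by have := rk_pos j; rewrite lt0n -leqn0 rj.
  rewrite /D eval_do_fix (negbTE jl) /E eval_fix; apply: f_parents.
    by move=> k ljk; move: (free k j ljk jl); rewrite connect0.
  move=> i pij; have [il|il] := boolP (i \in l); first exact: Dl.
  apply: IH => //; first by rewrite -ltnS; apply: leq_trans (rk_par _ _ pij) rj.
  move=> k a lak al; apply/negP => cai.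
  move: (free k a lak al); rewrite (connect_trans cai) //.
  by apply: connect1; rewrite /= pij il jl.
rewrite /layer_map /gM; apply: fy_parents => i yi.
have [il|il] := boolP (i \in l); first exact: (Dl i il).
apply: (key _ _ (leqnn _) il) => k a lak al; apply/negP => cai.
move/negP: cl; apply; apply/existsP; exists k; apply/existsP; exists a.
apply/existsP; exists i; by rewrite lak yi al il cai.
Qed.

End Comb.


Lemma comp_sub {X Y Z : topologicalType} (A : set X) (B : set Y)
  (f : X -> Y) (g : Y -> Z) : (forall x, A x -> B (f x)) ->
  {within A, continuous f} -> {within B, continuous g} ->
  {within A, continuous (g \o f)}.
Proof.
move=> fAB /continuousP ctsf ctsg.
have cf : continuous (f : subspace A -> subspace B).
  apply/continuousP => O /open_subspaceP [V oV VBOB].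
  rewrite -open_subspaceIT; apply/open_subspaceP.
  case/open_subspaceP: (ctsf _ oV) => W oW fVA; exists W => //.
  rewrite fVA -setIA setIid eqEsubset; split => x [fVx Ax]; split => //.
  - by have /[!VBOB]-[] : (V `&` B) (f x) by split => //; exact: fAB.
  - by have /[!esym VBOB]-[] : (O `&` B) (f x) by split => //; exact: fAB.
move=> x; exact: (@continuous_comp (subspace A) (subspace B) Z f g x (cf x) (ctsg (f x))).
Qed.

Lemma prod_cont {X : topologicalType} {I : eqType} {T : I -> topologicalType}
  (g : X -> prod_topology T) :
  (forall i, continuous (fun x => g x i)) -> continuous g.
Proof.
move=> cg x; apply/cvg_sup => i.
apply/cvg_image.
  rewrite eqEsubset; split => // y _; exists (dfwith (g x) i y) => //.
  by rewrite /= dfwithin.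
move=> B /= Bn; exists ((fun h : prod_topology T => h i) @^-1` B).
  exact: (cg i x B Bn).
rewrite eqEsubset; split => [y [h Bh <-] //|y By].
by exists (dfwith (g x) i y); rewrite /= dfwithin.
Qed.

Lemma inv_cont {T U : topologicalType} (A : set T) (f : T -> U) (x0 : T) :
  hausdorff_space U -> compact A -> {within A, continuous f} ->
  (forall x y, A x -> A y -> f x = f y -> x = y) ->
  exists h : U -> T, {within f @` A, continuous h} /\ (forall x, A x -> h (f x) = x).
Proof.
move=> hU cA fc finj.
pose h y := match pselect (exists x, A x /\ f x = y) with
  | left e => projT1 (cid e) | right _ => x0 end.
have hK x : A x -> h (f x) = x.
  move=> Ax; rewrite /h; case: pselect => [e|ne]; last by exfalso; apply: ne; exists x.
  by case: cid => x' [Ax' fx'] /=; apply: finj.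
exists h; split => //.
apply/continuous_closedP => C cC; apply/closed_subspaceP.
exists (f @` (C `&` A)).
  apply: compact_closed hU _; apply: continuous_compact.
    by apply: continuous_subspaceW fc; apply: subIsetr.
  by rewrite setIC; apply: compact_closedI.
rewrite eqEsubset; split => y.
  case=> -[x [Cx Ax] <-] _; split; last by exists x.
  by rewrite /from_subspace /= hK.
case=> hy [x Ax fxy]; split; last by exists x.
by exists x => //; split => //; move: hy; rewrite -fxy /from_subspace /= hK.
Qed.


Section Topo.
Context {R : realType} (M : CGM R).

Let S := [set p : 'rV[R]_(K M) * Vprod R (@d R M) | forall k, Zk k (p.1 ord0 k)].

Lemma iter_cont n : {within Zset M, continuous
  (fun z => iter n (fun V j => f j z V) (fun j => 0) : Vassign M)}.
Proof.
elim: n => [|n IH].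
  by apply: continuous_subspaceT; apply: cst_continuous.
apply: (@prod_cont (subspace (Zset M)) _ (fun i => 'rV[R]_(d i))) => j /=.
have -> : (fun z : subspace (Zset M) => f j z (iter n (fun V j => f j z V) (fun j => 0))) =
  (fun p : 'rV[R]_(K M) * Vprod R (@d R M) => f j p.1 p.2) \o
  (fun z => (z, iter n (fun V j => f j z V) (fun j => 0) : Vprod R (@d R M))) by [].
apply: (comp_sub _ S); [by [] | | exact: f_cont].
move=> x.
have c1 : {within Zset M, continuous (fun z : 'rV[R]_(K M) => z)}.
  by apply: continuous_subspaceT => ?; exact: cvg_id.
exact: (cvg_pair (c1 x) (IH x)).
Show.

Qed.

Lemma eval_cont : {within Zset M, continuous (Defs.eval M)}.
Proof. exact: iter_cont. Qed.

Lemma gM_cont : {within Zset M, continuous (Defs.gM M)}.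
Proof.
move=> x; apply: (@continuous_comp (subspace (Zset M)) (Vprod R (@d R M))).
  exact: eval_cont.
exact: fy_cont.
Qed.

Lemma proj_cont (j : 'I_(N M)) : continuous (fun v : Vassign M => v j).
Proof. move=> v; exact: (@proj_continuous _ (fun i => 'rV[R]_(d i)) j v). Qed.

Lemma iter_do_cont (l : {set 'I_(N M)}) z0 n : Zset M z0 ->
  continuous (fun v : Vassign M =>
    iter n (fun V j => if j \in l then v j else f j z0 V) (fun j => 0) : Vassign M).
Proof.
move=> Zz0; elim: n => [|n IH]; first exact: cst_continuous.
apply: (@prod_cont (Vassign M) _ (fun i => 'rV[R]_(d i))) => j /=.
case: (j \in l); first exact: proj_cont.
have -> : (fun v : Vassign M => f j z0 (iter n (fun V j => if j \in l then v j else f j z0 V) (fun j => 0))) =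
  (fun p : 'rV[R]_(K M) * Vprod R (@d R M) => f j p.1 p.2) \o
  (fun v : Vassign M => (z0, iter n (fun V j => if j \in l then v j else f j z0 V) (fun j => 0) : Vprod R (@d R M))) by [].
apply/continuous_subspace_setT.
apply: (comp_sub _ S); [by [] | | exact: f_cont].
apply: continuous_subspaceT => x.
exact: (cvg_pair (cvg_cst z0) (IH x)).
Qed.

Lemma layer_map_cont (l : {set 'I_(N M)}) z0 : Zset M z0 -> continuous (layer_map M l z0).
Proof.
move=> Zz0 x; apply: (@continuous_comp (Vassign M) (Vprod R (@d R M)) _ (fun v => eval_do M l v z0) (@fy R M) x).
  exact: (iter_do_cont l z0 (N M) Zz0 x).
exact: fy_cont.
Qed.

Lemma restr_cont (l : {set 'I_(N M)}) : continuous (@restr R M l).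
Proof.
apply: (@prod_cont (Vassign M) _ (fun i => 'rV[R]_(d i))) => j.
rewrite /restr; case: (j \in l); first exact: proj_cont.
exact: cst_continuous.
Qed.

End Topo.


Theorem proposition1 (R : realType) (M : CGM R) :
  (forall z z', Zset M z -> Zset M z' -> gM M z = gM M z' -> z = z') ->
  compact (Zset M) ->
  embedded M.
Proof.
move=> ginj cZ.
have hY : hausdorff_space 'rV[R]_(dy M) by apply: norm_hausdorff.
split.
  split; [exact: gM_cont | exact: ginj |].
  have [h [hc hK]] := inv_cont _ _ (0 : 'rV[R]_(K M)) hY cZ (gM_cont M) ginj.
  by exists h.
move=> l ll z0 Zz0.
have cl : Defs.cut M l := minsetp ll.
have linj : forall x y, layer_image M l x -> layer_image M l y ->
    layer_map M l z0 x = layer_map M l z0 y -> x = y.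
  move=> x y [z Zz <-] [z' Zz' <-].
  rewrite !layer_map_eval // => gzz.
  by rewrite (ginj z z' Zz Zz' gzz).
have lc : {within layer_image M l, continuous (layer_map M l z0)}.
  by apply: continuous_subspaceT; exact: layer_map_cont.
split => //.
have cI : compact (layer_image M l).
  apply: (@continuous_compact _ _ (fun z => restr l (Defs.eval M z)) (Zset M)) => //.
  move=> x; apply: (@continuous_comp (subspace (Zset M)) (Vassign M) _ (Defs.eval M) (@restr R M l) x).
    exact: eval_cont.
  exact: restr_cont.
have [h [hc hK]] := (@inv_cont (Vassign M) _ _ _ (fun j => 0)) hY cI lc linj.
by exists h.
Qed.
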